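(* Let $G=(V,E)$ be a $k$-uniform linear hypergraph with a vertex correspondence $\sigma$ and weighted lists of colours $(L,\mu)$ assigned to its vertices, where each list is finite. Let $\ell,n>0$ be such that (i) $\ell/n\ge 3e$ ($e$ Euler's number); (ii) $|L(v)|_\mu\ge\ell$ for all $v\in V$; (iii) $|N_{G,L,\sigma}(v,c)|_\mu\le n$ for all $v\in V$ and $c\in L(v)$. Then $G$ has an $(L,\sigma)$-colouring.
   Context: A hypergraph is $k$-uniform if every edge has exactly $k$ vertices, and linear if two distinct edges share at most one vertex; two distinct vertices are adjacent if they lie in a common edge. Colours are positive integers. A vertex correspondence $\sigma$ consists of permutations $\sigma_{u,v}$ of $\mathbb{N}$ for all ordered pairs of adjacent vertices $u,v$, with $\sigma_{v,u}=\sigma_{u,v}^{-1}$; $(u,c)$ blocks $(v,c')$ if $\sigma_{u,v}(c)=c'$. A weighted list assignment $(L,\mu)$ gives each vertex $v$ a list $L(v)\subseteq\mathbb{N}$ and weights $\mu(v)\colon L(v)\to[0,1]$, written $\mu(v,c)$; for a set $A$ of vertex–colour pairs, $|A|_\mu=\sum_{(v,c)\in A}\mu(v,c)$, and $|L(v)|_\mu=\sum_{c\in L(v)}\mu(v,c)$. An $(L,\sigma)$-colouring is $\gamma\colon V\to\mathbb{N}$ with $\gamma(v)\in L(v)$ for all $v$ such that $(v,\gamma(v))$ does not block $(u,\gamma(u))$ for all adjacent $u,v$. $N_{G,L,\sigma}(v,c)$ is the set of pairs $(w,c')$ with $w$ adjacent to $v$, $c'\in L(w)$, and $(w,c')$ blocking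 $(v,c)$. *)

(* Defs.v *)
From mathcomp Require Import all_boot all_order all_algebra.
From mathcomp Require Import reals sequences.
Set Implicit Arguments. Unset Strict Implicit. Unset Printing Implicit Defensive.
Import Order.TTheory GRing.Theory Num.Theory.
Local Open Scope ring_scope.

Definition uniform (V : finType) (k : nat) (E : {set {set V}}) : Prop :=
  forall e, e \in E -> #|e| = k.

Definition linear_hg (V : finType) (E : {set {set V}}) : Prop :=
  forall e f, e \in E -> f \in E -> e != f -> (#|e :&: f| <= 1)%N.

Definition adj (V : finType) (E : {set {set V}}) (u v : V) : bool :=
  (u != v) && [exists e in E, (u \in e) && (v \in e)].

(* Colours are natural numbers (a relabelling of the positive integers).
   sigma u v is the permutation sigma_{u,v}; only its values for adjacent
   u v matter. *)
Definition vertex_correspondence (V : finType) (E : {set {set V}})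
  (sigma : V -> V -> nat -> nat) : Prop :=
  forall u v, adj E u v ->
    bijective (sigma u v) /\ (forall c, sigma v u (sigma u v c) = c).

Definition blocks (V : finType) (sigma : V -> V -> nat -> nat)
  (u : V) (c : nat) (v : V) (c' : nat) : bool := sigma u v c == c'.

(* |L(v)|_mu, lists are duplicate-free sequences (finite sets) *)
Definition list_weight (R : realType) (V : finType) (L : V -> seq nat)
  (mu : V -> nat -> R) (v : V) : R :=
  \sum_(c <- L v) mu v c.

Definition nbhd_weight (R : realType) (V : finType) (E : {set {set V}})
  (sigma : V -> V -> nat -> nat) (L : V -> seq nat) (mu : V -> nat -> R)
  (v : V) (c : nat) : R :=
  \sum_(w | adj E w v) \sum_(c' <- L w | blocks sigma w c' v c) mu w c'.

Definition is_colouring (V : finType) (E : {set {set V}})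
  (sigma : V -> V -> nat -> nat) (L : V -> seq nat) (gamma : V -> nat) : Prop :=
  (forall v, gamma v \in L v) /\
  (forall u v, adj E u v -> ~~ blocks sigma v (gamma v) u (gamma u)).

(* Main.v *)
Require Import Defs.
From mathcomp Require Import all_boot all_order all_algebra.
From mathcomp Require Import reals sequences.
From mathcomp Require exp.
From mathcomp Require Import lra.
Set Implicit Arguments. Unset Strict Implicit. Unset Printing Implicit Defensive.
Import Order.TTheory GRing.Theory Num.Theory.
Local Open Scope ring_scope.

Definition upd (V : finType) (M : nat) (g : {ffun V -> 'I_M.+1}) (u : V) (i : 'I_M.+1)
  : {ffun V -> 'I_M.+1} := [ffun x => if x == u then i else g x].

Definition wt (R : realType) (V : finType) (L : V -> seq nat) (mu : V -> nat -> R)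
  (M : nat) (v : V) (i : 'I_M.+1) : R :=
  if (nat_of_ord i) \in L v then mu v i else 0.

Definition zout (V : finType) (M : nat) (U : {set V}) (g : {ffun V -> 'I_M.+1}) : bool :=
  [forall v, (v \notin U) ==> (g v == ord0)].

Definition proper (V : finType) (M : nat) (E : {set {set V}}) (sigma : V -> V -> nat -> nat)
  (U : {set V}) (g : {ffun V -> 'I_M.+1}) : bool :=
  [forall a, [forall b, ((a \in U) && (b \in U) && adj E a b) ==>
      ~~ blocks sigma a (g a) b (g b)]].

Definition GG (R : realType) (V : finType) (L : V -> seq nat) (mu : V -> nat -> R)
  (M : nat) (U : {set V}) (g : {ffun V -> 'I_M.+1}) : R :=
  \prod_(v in U) wt L mu v (g v).

Definition Z (R : realType) (V : finType) (E : {set {set V}}) (sigma : V -> V -> nat -> nat)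
  (L : V -> seq nat) (mu : V -> nat -> R) (M : nat) (U : {set V}) : R :=
  \sum_(g : {ffun V -> 'I_M.+1} | zout U g && proper E sigma U g) GG L mu U g.

Definition Zf (R : realType) (V : finType) (E : {set {set V}}) (sigma : V -> V -> nat -> nat)
  (L : V -> seq nat) (mu : V -> nat -> R) (M : nat) (U : {set V}) (u : V) (i : 'I_M.+1) : R :=
  \sum_(g : {ffun V -> 'I_M.+1} | zout U g && proper E sigma U g && (g u == i)) GG L mu U g.

Lemma Z_split (R : realType) (V : finType) (E : {set {set V}}) (sigma : V -> V -> nat -> nat)
  (L : V -> seq nat) (mu : V -> nat -> R) (M : nat) (U : {set V}) (u : V) :
  Z E sigma L mu M U = \sum_(i : 'I_M.+1) Zf E sigma L mu U u i.
Proof.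
by rewrite /Z (partition_big (fun g : {ffun V -> 'I_M.+1} => g u) xpredT).
Qed.

Lemma Zf_reindex (R : realType) (V : finType) (E : {set {set V}}) (sigma : V -> V -> nat -> nat)
  (L : V -> seq nat) (mu : V -> nat -> R) (M : nat) (U : {set V}) (u : V) (i : 'I_M.+1) :
  u \in U ->
  Zf E sigma L mu U u i = wt L mu u i *
    \sum_(g : {ffun V -> 'I_M.+1} | zout (U :\ u) g && proper E sigma (U :\ u) g
                                   && proper E sigma U (upd g u i)) GG L mu (U :\ u) g.
Proof.
move=> uU.
rewrite /Zf (reindex_onto (fun g => upd g u i) (fun g => upd g u ord0)); last first.
  move=> g /andP[_ /eqP gu]; apply/ffunP => x; rewrite /upd !ffunE.
  by case: eqP => [->|].
rewrite mulr_sumr; apply: eq_big => g.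
  apply/idP/idP.
  - move=> /andP[/andP[/andP[zo pr] _] /eqP eg].
    have gu : g u = ord0 by rewrite -eg /upd ffunE eqxx.
    apply/andP; split; last by [].
    apply/andP; split.
      apply/forallP => v; apply/implyP; rewrite in_setD1 negb_and negbK.
      case/orP => [/eqP->|vU]; first by rewrite gu.
      have vu : v != u by apply: contraNneq vU => ->.
      by have := forallP zo v; rewrite vU /= /upd ffunE (negbTE vu).
    apply/forallP => a; apply/forallP => b; apply/implyP.
    rewrite !in_setD1 => /andP[/andP[/andP[au aU] /andP[bu bU]] ab].
    have := forallP (forallP pr a) b; rewrite aU bU ab /=.
    by rewrite /upd ?ffunE (negbTE au) (negbTE bu) => H *.
  - move=> /andP[/andP[zo pr] pr2].
    have gu : g u == ord0 by have := forallP zo u; rewrite setD11.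
    have -> : upd g u i u == i by rewrite /upd ffunE eqxx.
    rewrite andbT; apply/andP; split; last first.
      apply/eqP/ffunP => x; rewrite /upd !ffunE.
      by case: eqP => [->|]; [rewrite (eqP gu)|].
    apply/andP; split; last exact: pr2.
      apply/forallP => v; apply/implyP => vU.
      have vu : v != u by apply: contraNneq vU => ->.
      have := forallP zo v; rewrite in_setD1 vu vU /= /upd ffunE.
      by rewrite (negbTE vu).
move=> _; rewrite /GG (bigD1 u) //= /upd ffunE eqxx; congr (_ * _).
apply: eq_big => v; first by rewrite in_setD1 andbC.
by move=> /andP[_ vu]; rewrite ffunE (negbTE vu).
Qed.

Lemma sum_ord_list (R : realType) (s : seq nat) (M : nat) (F : nat -> R) :
  uniq s -> (forall c, c \in s -> (c < M.+1)%N) ->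
  \sum_(i : 'I_M.+1) (if (nat_of_ord i) \in s then F i else 0) = \sum_(c <- s) F c.
Proof.
move=> us hs.
rewrite -(big_mkord xpredT (fun i => if i \in s then F i else 0)) -big_mkcond /=.
rewrite -big_filter; apply: perm_big; apply: uniq_perm => //.
  by rewrite filter_uniq // iota_uniq.
by move=> c; rewrite mem_filter mem_iota /= add0n; case: (boolP (c \in s)) => // /hs ->.
Qed.

Lemma wt_ge0 (R : realType) (V : finType) (L : V -> seq nat) (mu : V -> nat -> R) M v
  (i : 'I_M.+1) : (forall v c, c \in L v -> 0 <= mu v c) -> 0 <= wt L mu v i.
Proof. by move=> h; rewrite /wt; case: ifP => // /h. Qed.

Lemma GG_ge0 (R : realType) (V : finType) (L : V -> seq nat) (mu : V -> nat -> R) M U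
  (g : {ffun V -> 'I_M.+1}) : (forall v c, c \in L v -> 0 <= mu v c) -> 0 <= GG L mu U g.
Proof. by move=> h; rewrite /GG; apply: prodr_ge0 => v _; apply: wt_ge0. Qed.

Lemma Z_ge0 (R : realType) (V : finType) (E : {set {set V}}) sigma (L : V -> seq nat) (mu : V -> nat -> R) M (U : {set V}) :
  (forall v c, c \in L v -> 0 <= mu v c) -> 0 <= Z E sigma L mu M U.
Proof. by move=> h; rewrite /Z; apply: sumr_ge0 => g _; apply: GG_ge0. Qed.

Lemma sum_le_cond (R : realType) (T : finType) (P Q : pred T) (F : T -> R) :
  (forall x, P x -> Q x) -> (forall x, Q x -> 0 <= F x) ->
  \sum_(x | P x) F x <= \sum_(x | Q x) F x.
Proof.
move=> PQ F0; rewrite [X in _ <= X](bigID P) /=.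
have -> : \sum_(i | Q i && P i) F i = \sum_(i | P i) F i.
  by apply: eq_bigl => x; apply/andP/idP => [[]//|Px]; split => //; apply: PQ.
by rewrite lerDl; apply: sumr_ge0 => x /andP[Qx _]; exact: F0.
Qed.

Lemma Zf_le (R : realType) (V : finType) (E : {set {set V}}) sigma (L : V -> seq nat) (mu : V -> nat -> R)
  M (U : {set V}) (u : V) (i : 'I_M.+1) : (forall v c, c \in L v -> 0 <= mu v c) -> u \in U ->
  Zf E sigma L mu U u i <= wt L mu u i * Z E sigma L mu M (U :\ u).
Proof.
move=> h uU; rewrite Zf_reindex //; apply: ler_wpM2l; first exact: wt_ge0.
apply: sum_le_cond => [g /andP[]//|g _]; exact: GG_ge0.
Qed.

Lemma adjC (V : finType) (E : {set {set V}}) a b : adj E a b = adj E b a.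
Proof.
rewrite /adj eq_sym; congr (_ && _).
by apply/existsP/existsP => -[e /andP[eE /andP[h1 h2]]]; exists e; rewrite eE h1 h2.
Qed.

Lemma adj_irr (V : finType) (E : {set {set V}}) a : adj E a a = false.
Proof. by rewrite /adj eqxx. Qed.

Lemma witness (V : finType) (E : {set {set V}}) sigma M (U : {set V}) (u : V) (i : 'I_M.+1)
  (g : {ffun V -> 'I_M.+1}) :
  vertex_correspondence E sigma ->
  proper E sigma (U :\ u) g -> ~~ proper E sigma U (upd g u i) ->
  exists w, [&& w \in U :\ u, adj E w u & blocks sigma w (g w) u i].
Proof.
move=> hvc pr npr.
case: (boolP [exists w, [&& w \in U :\ u, adj E w u & blocks sigma w (g w) u i]]).
  by move/existsP.
move/existsPn => nw; exfalso; move/negP: npr; apply.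
apply/forallP => a; apply/forallP => b; apply/implyP => /andP[/andP[aU bU] ab].
rewrite /upd !ffunE.
have nw' : forall w, w \in U :\ u -> adj E w u -> ~~ blocks sigma w (g w) u i.
  by move=> w h1 h2; have := nw w; rewrite h1 h2.
case: (eqVneq a u) => [au|au]; case: (eqVneq b u) => [bu|bu].
- by move: ab; rewrite au bu adj_irr.
- subst a; apply/negP => /eqP hb.
  have := nw' b; rewrite in_setD1 bu bU adjC ab => /(_ isT isT); apply/negP/negPn.
  by rewrite /blocks -hb; case: (hvc u b ab) => _ ->.
- by subst b; apply: nw'; rewrite // in_setD1 au aU.
- by have := forallP (forallP pr a) b; rewrite !in_setD1 au bu aU bU ab.
Qed.

Lemma step (R : realType) (V : finType) (E : {set {set V}}) (sigma : V -> V -> nat -> nat)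
  (L : V -> seq nat) (mu : V -> nat -> R) (M : nat) (ell n : R)
  (hmu : forall v c, c \in L v -> 0 <= mu v c)
  (hvc : vertex_correspondence E sigma)
  (huq : forall v, uniq (L v))
  (hM : forall v c, c \in L v -> (c < M.+1)%N)
  (hl : 0 < ell) (hr : 4 * n <= ell)
  (hW : forall v, ell <= list_weight L mu v)
  (hN : forall v c, c \in L v -> nbhd_weight E sigma L mu v c <= n)
  (U : {set V}) (u : V) (uU : u \in U)
  (IH : forall w, w \in U :\ u ->
     ell * Z E sigma L mu M (U :\ u :\ w) <= 2 * Z E sigma L mu M (U :\ u)) :
  ell * Z E sigma L mu M (U :\ u) <= 2 * Z E sigma L mu M U.
Proof.
set Z' := Z E sigma L mu M (U :\ u).
have Z'0 : 0 <= Z' by apply: Z_ge0.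
pose A (g : {ffun V -> 'I_M.+1}) := zout (U :\ u) g && proper E sigma (U :\ u) g.
pose T (i : 'I_M.+1) := \sum_(g | A g && ~~ proper E sigma U (upd g u i)) GG L mu (U :\ u) g.
pose ind (w : V) (j : nat) (i : 'I_M.+1) : R := (blocks sigma w j u i)%:R.
have ind0 : forall w j i, 0 <= ind w j i by move=> w j i; rewrite /ind ler0n.
have decomp : forall i, Zf E sigma L mu U u i = wt L mu u i * (Z' - T i).
  move=> i; rewrite Zf_reindex //; congr (_ * _).
  by rewrite /Z' /Z [X in _ = X - _](bigID (fun g => proper E sigma U (upd g u i))) /= addrK.
have Tb : forall i : 'I_M.+1, (nat_of_ord i) \in L u -> ell * T i <= 2 * n * Z'.
  move=> i iL.
  have h1 : T i <= \sum_(g | A g) (\sum_(w | (w \in U :\ u) && adj E w u) ind w (g w) i)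
                                   * GG L mu (U :\ u) g.
    have nn : forall g, A g -> 0 <= (\sum_(w | (w \in U :\ u) && adj E w u) ind w (g w) i)
                                   * GG L mu (U :\ u) g.
      by move=> g _; apply: mulr_ge0; [apply: sumr_ge0 => w _|apply: GG_ge0].
    apply: le_trans (@sum_le_cond R _ (fun g => A g && ~~ proper E sigma U (upd g u i)) A _
        (fun g h => proj1 (andP h)) nn).
    apply: ler_sum => g /andP[Ag npr].
    have [w /and3P[wU wa wb]] := witness hvc (proj2 (andP Ag)) npr.
    apply: ler_peMl; first exact: GG_ge0.
    rewrite (bigD1 w) /=; last by rewrite wU wa.
    rewrite /ind wb lerDl; apply: sumr_ge0 => ? _; exact: ind0.
  have h2 : \sum_(g | A g) (\sum_(w | (w \in U :\ u) && adj E w u) ind w (g w) i)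
                                   * GG L mu (U :\ u) g =
     \sum_(w | (w \in U :\ u) && adj E w u) \sum_(j : 'I_M.+1)
         ind w j i * Zf E sigma L mu (U :\ u) w j.
    under eq_bigr do rewrite mulr_suml.
    rewrite exchange_big /=; apply: eq_bigr => w _.
    rewrite (partition_big (fun g : {ffun V -> 'I_M.+1} => g w) xpredT) //=.
    apply: eq_bigr => j _; rewrite /Zf mulr_sumr; apply: eq_bigr => g /andP[_ /eqP ->].
    by [].
  have h3 : forall w, w \in U :\ u ->
     ell * (\sum_(j : 'I_M.+1) ind w j i * Zf E sigma L mu (U :\ u) w j) <=
     2 * Z' * \sum_(c <- L w | blocks sigma w c u i) mu w c.
    move=> w wU.
    have -> : \sum_(c <- L w | blocks sigma w c u i) mu w c =
              \sum_(j : 'I_M.+1) ind w j i * wt L mu w j.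
      rewrite (big_mkcond (fun c => blocks sigma w c u i)) /=.
      rewrite -(@sum_ord_list R (L w) M _ (huq w) (hM w)); apply: eq_bigr => j _.
      rewrite /wt /ind; case: (_ \in _); last by rewrite mulr0.
      by case: blocks; rewrite ?mul1r ?mul0r.
    rewrite !mulr_sumr; apply: ler_sum => j _.
    have hz := Zf_le E sigma j hmu wU.
    have hI := IH w wU.
    have hw := wt_ge0 w j hmu.
    apply: le_trans (_ : ell * (ind w j i * (wt L mu w j * Z E sigma L mu M (U :\ u :\ w))) <= _).
      apply: ler_wpM2l; first exact: ltW.
      by apply: ler_wpM2l; [exact: ind0|exact: hz].
    rewrite mulrCA [X in _ <= X]mulrCA; apply: ler_wpM2l; first exact: ind0.
    rewrite mulrCA [X in _ <= X]mulrC; apply: ler_wpM2l; [exact: hw|]; rewrite -mulr_sumr; exact: hI.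
  have h4 : \sum_(w | (w \in U :\ u) && adj E w u)
              \sum_(c <- L w | blocks sigma w c u i) mu w c <= n.
    apply: le_trans (hN u i iL); rewrite /nbhd_weight.
    apply: sum_le_cond => [w /andP[]//|w _].
    by rewrite big_seq_cond; apply: sumr_ge0 => c /andP[cL _]; apply: hmu.
  apply: le_trans (ler_wpM2l (ltW hl) h1) _; rewrite h2 mulr_sumr.
  apply: le_trans (ler_sum _ (fun w h => h3 w (proj1 (andP h)))) _.
  rewrite -mulr_sumr (mulrC 2 n) -mulrA (mulrC n) mulrA.
  rewrite [2 * n * Z']mulrAC; apply: ler_wpM2l; last exact: h4.
  by apply: mulr_ge0.
rewrite (Z_split E sigma L mu M U u).
have hT : forall i : 'I_M.+1, wt L mu u i * (Z' / 2) <= Zf E sigma L mu U u i.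
  move=> i; rewrite decomp.
  case: (boolP ((nat_of_ord i) \in L u)) => [iL|niL]; last first.
    by rewrite /wt (negbTE niL) !mul0r.
  apply: ler_wpM2l; first exact: wt_ge0.
  have hb := Tb i iL.
  have : ell * T i <= ell * (Z' / 2) by nra.
  rewrite ler_pM2l // => h; lra.
have hs : \sum_(i : 'I_M.+1) wt L mu u i * (Z' / 2) <= \sum_(i : 'I_M.+1) Zf E sigma L mu U u i.
  by apply: ler_sum => i _; exact: hT.
have hw : \sum_(i : 'I_M.+1) wt L mu u i = list_weight L mu u.
  by rewrite /wt (@sum_ord_list R (L u) M (mu u) (huq u) (hM u)).
rewrite -mulr_suml hw in hs.
have := hW u; nra.
Qed.

Lemma Z0_gt0 (R : realType) (V : finType) (E : {set {set V}}) sigma (L : V -> seq nat)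
  (mu : V -> nat -> R) M : 0 < Z E sigma L mu M set0.
Proof.
rewrite /Z (bigD1 [ffun=> ord0]) /=; last first.
  apply/andP; split.
    by apply/forallP => v; rewrite ffunE eqxx implybT.
  by apply/forallP => a; apply/forallP => b; rewrite in_set0.
rewrite {1}/GG big_set0; apply: (lt_le_trans ltr01); rewrite lerDl.
by apply: sumr_ge0 => g _; rewrite /GG big_set0.
Qed.

Theorem lemma7p1 (R : realType) (V : finType) (k : nat) (E : {set {set V}})
  (sigma : V -> V -> nat -> nat) (L : V -> seq nat) (mu : V -> nat -> R)
  (ell n : R) :
  uniform k E -> linear_hg E -> vertex_correspondence E sigma ->
  (forall v, uniq (L v)) ->
  (forall v c, c \in L v -> 0 <= mu v c <= 1) ->
  0 < ell -> 0 < n ->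
  ell / n >= 3 * expR 1 ->
  (forall v, list_weight L mu v >= ell) ->
  (forall v c, c \in L v -> nbhd_weight E sigma L mu v c <= n) ->
  exists gamma : V -> nat, is_colouring E sigma L gamma.
Proof.
move=> _ _ hvc huq hmu01 hl hn hratio hW hN.
have hmu : forall v c, c \in L v -> 0 <= mu v c by move=> v c /hmu01 /andP[].
pose M := (\max_(v : V) (\sum_(c <- L v) c)%N)%N.
have hM : forall v c, c \in L v -> (c < M.+1)%N.
  move=> v c cL; rewrite ltnS; apply: leq_trans (leq_bigmax v).
  by rewrite (big_rem c cL) /= leq_addr.
have hr : 4 * n <= ell.
  have he := @exp.expR_ge1Dx R 1.
  rewrite ler_pdivlMr // in hratio; nra.
have claim : forall m (U : {set V}), (#|U| <= m)%N ->
   0 < Z E sigma L mu M U /\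
   (forall u, u \in U -> ell * Z E sigma L mu M (U :\ u) <= 2 * Z E sigma L mu M U).
  elim=> [|m IHm] U hU.
    move: hU; rewrite leqn0 => /eqP/cards0_eq ->.
    by split; [exact: Z0_gt0|move=> u; rewrite in_set0].
  have ineq : forall u, u \in U -> ell * Z E sigma L mu M (U :\ u) <= 2 * Z E sigma L mu M U.
    move=> u uU.
    have hc : (#|U :\ u| <= m)%N by move: hU; rewrite (cardsD1 u) uU.
    have [_ IH] := IHm _ hc.
    exact: (step hmu hvc huq hM hl hr hW hN uU IH).
  split => //.
  case: (eqVneq U set0) => [->|/set0Pn [u uU]]; first exact: Z0_gt0.
  have hc : (#|U :\ u| <= m)%N by move: hU; rewrite (cardsD1 u) uU.
  have [pos _] := IHm (U :\ u) hc.
  have := ineq u uU; nra.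
have [Zpos _] := claim _ [set: V] (leqnn _).
case: (pickP (fun g : {ffun V -> 'I_M.+1} =>
   zout [set: V] g && proper E sigma [set: V] g && (0 < GG L mu [set: V] g))) => [g|none].
  move=> /andP[/andP[_ pr] pos].
  exists (fun v => nat_of_ord (g v)); split.
    move=> v; apply: contraTT pos => nv.
    by rewrite /GG (bigD1 v) //= /wt (negbTE nv) mul0r ltxx.
  move=> u v uv.
  by have := forallP (forallP pr v) u; rewrite !in_setT adjC uv.
exfalso; move: Zpos; rewrite /Z big1 ?ltxx // => g hg.
have := none g; rewrite hg /= => /negbT; rewrite -leNgt => h.
by apply/eqP; rewrite eq_le h GG_ge0.
Qed.
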